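(* Let $G$ be an infinite discrete group and let $X$ be a minimal $G$-flow. The following are equivalent: (i) For every finite $D\subseteq G$ there is a $D$-separated $S\subseteq G$ such that for every $x\in X$, the set $S\cdot x$ is dense in $X$. (ii) $X$ has the separated covering property. (iii) $X$ is disjoint from the Bernoulli flow $2^G$.
   Context: A $G$-flow is a compact Hausdorff space with an action of $G$ by homeomorphisms; it is minimal if every orbit is dense. For finite $D\subseteq G$, a set $S\subseteq G$ is $D$-separated if $Dg\cap Dh=\emptyset$ for all distinct $g,h\in S$. A minimal $G$-flow $X$ has the separated covering property (SCP) if for every finite $D\subseteq G$ and every non-empty open $U\subseteq X$ there exists a $D$-separated $S\subseteq G$ with $S^{-1}U=X$. The Bernoulli flow is $2^G$ with the action $(g\cdot z)(h)=z(hg)$. Two $G$-flows $X,Y$ are disjoint if the only closed $G$-invariant subset of $X\times Y$ projecting onto both factors is $X\times Y$. *)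

(* Defs.v *)
From Stdlib Require Import List Classical.
Import ListNotations.
Set Implicit Arguments.

Record group := Group {
  gcar :> Type;
  gmul : gcar -> gcar -> gcar;
  ginv : gcar -> gcar;
  gone : gcar;
  gmulA : forall a b c, gmul a (gmul b c) = gmul (gmul a b) c;
  gmul1l : forall a, gmul gone a = a;
  gmul1r : forall a, gmul a gone = a;
  gmulVl : forall a, gmul (ginv a) a = gone;
  gmulVr : forall a, gmul a (ginv a) = gone
}.
Arguments gmul {_} _ _.
Arguments ginv {_} _.
Arguments gone {_}.

Definition infinite_group (G : group) : Prop :=
  forall l : list G, exists g : G, ~ In g l.

Definition topology (X : Type) := (X -> Prop) -> Prop.

Definition is_topology {X : Type} (op : topology X) : Prop :=
  op (fun _ => True) /\
  (forall U V, op U -> op V -> op (fun x => U x /\ V x)) /\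
  (forall F : (X -> Prop) -> Prop, (forall U, F U -> op U) ->
      op (fun x => exists U, F U /\ U x)).

Definition compact {X : Type} (op : topology X) : Prop :=
  forall F : (X -> Prop) -> Prop,
    (forall U, F U -> op U) -> (forall x, exists U, F U /\ U x) ->
    exists l : list (X -> Prop),
      (forall U, In U l -> F U) /\ (forall x, exists U, In U l /\ U x).

Definition hausdorff {X : Type} (op : topology X) : Prop :=
  forall x y, x <> y -> exists U V, op U /\ op V /\ U x /\ V y /\
    (forall z, ~ (U z /\ V z)).

Definition continuous {X Y : Type} (opX : topology X) (opY : topology Y)
  (f : X -> Y) : Prop :=
  forall V, opY V -> opX (fun x => V (f x)).

Definition closed {X : Type} (op : topology X) (C : X -> Prop) : Prop :=
  op (fun x => ~ C x).

Definition dense {X : Type} (op : topology X) (A : X -> Prop) : Prop :=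
  forall U, op U -> (exists y, U y) -> exists y, U y /\ A y.

Definition is_action {G : group} {X : Type} (act : G -> X -> X) : Prop :=
  (forall x, act gone x = x) /\
  (forall g h x, act (gmul g h) x = act g (act h x)).

(** A G-flow: compact Hausdorff space with an action by homeomorphisms
    (each act g is continuous, with continuous inverse act (ginv g)). *)
Definition is_flow {G : group} {X : Type} (op : topology X)
  (act : G -> X -> X) : Prop :=
  is_topology op /\ compact op /\ hausdorff op /\ is_action act /\
  (forall g, continuous op op (act g)).

Definition orbit_of {G : group} {X : Type} (act : G -> X -> X)
  (S : G -> Prop) (x : X) : X -> Prop :=
  fun y => exists s, S s /\ y = act s x.

Definition minimal {G : group} {X : Type} (op : topology X)
  (act : G -> X -> X) : Prop :=
  forall x, dense op (orbit_of act (fun _ => True) x).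

(** S is D-separated: D g and D h are disjoint for distinct g, h in S.
    Finite subsets D of G are given as lists. *)
Definition separated {G : group} (D : list G) (S : G -> Prop) : Prop :=
  forall g h, S g -> S h -> g <> h ->
    forall d1 d2, In d1 D -> In d2 D -> gmul d1 g <> gmul d2 h.

(** Separated covering property: S^{-1} U = X, i.e. every x has some
    s in S with s . x in U. *)
Definition SCP {G : group} {X : Type} (op : topology X)
  (act : G -> X -> X) : Prop :=
  forall (D : list G) (U : X -> Prop), op U -> (exists x, U x) ->
    exists S : G -> Prop, separated D S /\
      (forall x, exists s, S s /\ U (act s x)).

Definition prod_top {X Y : Type} (opX : topology X) (opY : topology Y)
  : topology (X * Y) :=
  fun W => forall p, W p -> exists U V, opX U /\ opY V /\ U (fst p) /\
    V (snd p) /\ (forall q, U (fst q) -> V (snd q) -> W q).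

Definition disjoint_flows {G : group} {X Y : Type}
  (opX : topology X) (actX : G -> X -> X)
  (opY : topology Y) (actY : G -> Y -> Y) : Prop :=
  forall C : X * Y -> Prop,
    closed (prod_top opX opY) C ->
    (forall g p, C p -> C (actX g (fst p), actY g (snd p))) ->
    (forall x, exists y, C (x, y)) ->
    (forall y, exists x, C (x, y)) ->
    forall p, C p.

Definition bern_top (G : group) : topology (G -> bool) :=
  fun U => forall z, U z -> exists F : list G,
    forall z', (forall h, In h F -> z' h = z h) -> U z'.

Definition bern_act {G : group} (g : G) (z : G -> bool) : G -> bool :=
  fun h => z (gmul h g).

(* Main.v *)
Require Import Defs.
From Stdlib Require Import List Classical.
From Stdlib Require Import ClassicalEpsilon Cantor.
From mathcomp Require ssreflect ssrbool eqtype boolp classical_sets wochoice.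
Import ListNotations.

Module WO.
Import ssreflect ssrbool eqtype boolp wochoice.
Lemma asb_i (P : Prop) : asbool P = true -> P.
Proof. intro H. exact (elimT (asboolP P) H). Qed.
Lemma asb_j (P : Prop) : P -> asbool P = true.
Proof. intro H. exact (introT (asboolP P) H). Qed.

Lemma zorn (T : Type) (t0 : T) (R : T -> T -> Prop) :
  (forall t, R t t) -> (forall r s t, R r s -> R s t -> R r t) ->
  (forall A : T -> Prop, (forall s t, A s -> A t -> R s t \/ R t s) ->
     exists t, forall s, A s -> R s t) ->
  exists t, forall s, R t s -> R s t.
Proof.
  intros Hr Ht Hc.
  destruct (@classical_sets.ZL_preorder T t0 (fun x y => asbool (R x y))) as [m Hm].
  - intro t. apply asb_j. apply Hr.
  - intros r s t H1 H2. apply asb_j.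
    apply (Ht r s t); apply asb_i; assumption.
  - intros A HA. destruct (Hc A) as [t Ht'].
    + intros s t Hs Htt. destruct (HA s t Hs Htt) as [H|H];
        [left|right]; apply asb_i; exact H.
    + exists t. intros s Hs. apply asb_j. apply Ht'; exact Hs.
  - exists m. intros s Hs. apply asb_i. apply Hm. apply asb_j. exact Hs.
Qed.

Lemma wo_exists (T : Type) : exists R : T -> T -> Prop,
  (forall A : T -> Prop, (exists x, A x) -> exists m, A m /\ forall y, A y -> R m y) /\
  (forall x y, R x y -> R y x -> x = y) /\ (forall x y, R x y \/ R y x).
Proof.
  destruct (well_ordering_principle {classic T}) as [R HR].
  exists (fun x y => R x y = true).
  assert (Hmin : forall A : T -> Prop, (exists x, A x) ->
            exists m, A m /\ forall y, A y -> R m y = true).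
  { intros A [x Ax].
    destruct (HR (fun y => asbool (A y))) as [m [[Hm1 Hm2] _]].
    - exists x. apply asb_j. exact Ax.
    - exists m. split.
      + apply asb_i. exact Hm1.
      + intros y Ay. apply Hm2. apply asb_j. exact Ay. }
  split; [exact Hmin|].
  assert (Hrefl : forall x, R x x = true).
  { intro x. destruct (HR (fun z => asbool (z = x))) as [m [[Hm1 Hm2] _]].
    - exists x. apply asb_j. reflexivity.
    - apply asb_i in Hm1. rewrite -Hm1. apply Hm2. apply asb_j. exact Hm1. }
  assert (Hanti : forall x y, R x y = true -> R y x = true -> x = y).
  { intros x y H1 H2.
    destruct (HR (fun z => asbool (z = x \/ z = y))) as [m [_ Hu]].
    + exists x. apply asb_j. left; reflexivity.
    + assert (Ex : m = x).
      { apply Hu. split.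
        - apply asb_j; left; reflexivity.
        - intros z Hz. apply asb_i in Hz. destruct Hz as [Hz|Hz]; rewrite Hz.
          + apply Hrefl.
          + exact H1. }
      assert (Ey : m = y).
      { apply Hu. split.
        - apply asb_j; right; reflexivity.
        - intros z Hz. apply asb_i in Hz. destruct Hz as [Hz|Hz]; rewrite Hz.
          + exact H2.
          + apply Hrefl. }
      rewrite -Ex -Ey. reflexivity. }
  split; [exact Hanti|].
  intros x y.
  destruct (Hmin (fun z => z = x \/ z = y)) as [m [[Hm|Hm] Hm2]].
  - exists x; left; reflexivity.
  - subst m. left. apply Hm2. right; reflexivity.
  - subst m. right. apply Hm2. left; reflexivity.
Qed.
End WO.

Definition inj {A B : Type} (f : A -> B) := forall x y, f x = f y -> x = y.
Definition le (A B : Type) := exists f : A -> B, inj f.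

Lemma le_trans A B C : le A B -> le B C -> le A C.
Proof.
  intros [f Hf] [g Hg]. exists (fun x => g (f x)). intros x y H. apply Hf, Hg, H.
Qed.


Lemma sig_eq {X : Type} {P : X -> Prop} (x y : sig P) : proj1_sig x = proj1_sig y -> x = y.
Proof. destruct x, y; simpl; intro; subst; f_equal; apply proof_irrelevance. Qed.

Lemma comparability (A B : Type) : le A B \/ le B A.
Proof.
  set (Inv := fun P : A -> B -> Prop =>
     (forall a b b', P a b -> P a b' -> b = b') /\ (forall a a' b, P a b -> P a' b -> a = a')).
  set (T := {P : A -> B -> Prop | Inv P}).
  assert (I0 : Inv (fun _ _ => False)). { split; intros; contradiction. }
  set (R := fun p q : T => forall a b, proj1_sig p a b -> proj1_sig q a b).
  destruct (@WO.zorn T (exist _ _ I0) R) as [m Hm].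
  - intros t a b H; exact H.
  - intros r s t H1 H2 a b H. apply H2, H1, H.
  - intros Ch HCh.
    set (U := fun a b => exists p, Ch p /\ proj1_sig p a b).
    assert (IU : Inv U).
    { split.
      - intros a b b' [p [Hp Hpa]] [q [Hq Hqa]].
        destruct (HCh p q Hp Hq) as [Hpq|Hqp].
        + apply (proj1 (proj2_sig q) a); [apply Hpq|]; assumption.
        + apply (proj1 (proj2_sig p) a); [|apply Hqp]; assumption.
      - intros a a' b [p [Hp Hpa]] [q [Hq Hqa]].
        destruct (HCh p q Hp Hq) as [Hpq|Hqp].
        + apply (proj2 (proj2_sig q) a a' b); [apply Hpq|]; assumption.
        + apply (proj2 (proj2_sig p) a a' b); [|apply Hqp]; assumption. }
    exists (exist _ U IU). intros p Hp a b H. exists p. split; assumption.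
  - destruct m as [P [Pf Pi]]. simpl in *.
    destruct (classic (forall a, exists b, P a b)) as [Hall|Hn].
    + left. exists (fun a => proj1_sig (constructive_indefinite_description _ (Hall a))).
      intros x y Hxy.
      destruct (constructive_indefinite_description _ (Hall x)) as [bx Hx].
      destruct (constructive_indefinite_description _ (Hall y)) as [by' Hy].
      simpl in Hxy. subst. apply (Pi x y by'); assumption.
    + destruct (classic (forall b, exists a, P a b)) as [Hall2|Hn2].
      * right. exists (fun b => proj1_sig (constructive_indefinite_description _ (Hall2 b))).
        intros x y Hxy.
        destruct (constructive_indefinite_description _ (Hall2 x)) as [ax Hx].
        destruct (constructive_indefinite_description _ (Hall2 y)) as [ay Hy].
        simpl in Hxy. subst. apply (Pf ay x y); assumption.
      * apply not_all_ex_not in Hn. destruct Hn as [a0 Ha0].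
        apply not_all_ex_not in Hn2. destruct Hn2 as [b0 Hb0].
        set (P' := fun a b => P a b \/ (a = a0 /\ b = b0)).
        assert (IP : Inv P').
        { split.
          - intros a b b' [H|[H1 H2]] [H'|[H1' H2']].
            + apply (Pf a); assumption.
            + subst. exfalso. apply Ha0. exists b. exact H.
            + subst. exfalso. apply Ha0. exists b'. exact H'.
            + congruence.
          - intros a a' b [H|[H1 H2]] [H'|[H1' H2']].
            + apply (Pi a a' b); assumption.
            + subst. exfalso. apply Hb0. exists a. exact H.
            + subst. exfalso. apply Hb0. exists a'. exact H'.
            + congruence. }
        assert (HR : R (exist _ P (conj Pf Pi)) (exist _ P' IP)).
        { intros a b H. left. exact H. }
        specialize (Hm _ HR). simpl in Hm.
        exfalso. apply Ha0. exists b0. apply Hm. right. split; reflexivity.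
Qed.

Lemma cantor_inj : forall p q : nat * nat, to_nat p = to_nat q -> p = q.
Proof.
  intros p q H. rewrite <- (cancel_of_to p), <- (cancel_of_to q), H. reflexivity.
Qed.

Lemma hess (A : Type) : le nat A -> le (A * A) A.
Proof.
  intros [e He].
  set (inv := fun x : A => epsilon (inhabits 0) (fun n => e n = x)).
  assert (Hinv : forall n, e (inv (e n)) = e n).
  { intro n. unfold inv. apply (epsilon_spec (inhabits 0) (fun k => e k = e n)).
    exists n; reflexivity. }
  set (Inv := fun p : (A -> Prop) * (A -> A -> A) =>
     (forall n, fst p (e n)) /\ (forall x y, fst p x -> fst p y -> fst p (snd p x y)) /\
     (forall x y x' y', fst p x -> fst p y -> fst p x' -> fst p y' ->
        snd p x y = snd p x' y' -> x = x' /\ y = y')).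
  set (T := {p | Inv p}).
  set (B0 := fun x : A => exists n, x = e n).
  set (f0 := fun x y : A => e (to_nat (inv x, inv y))).
  assert (I0 : Inv (B0, f0)).
  { split; [|split].
    - intro n; exists n; reflexivity.
    - intros x y _ _. eexists; reflexivity.
    - intros x y x' y' [a ->] [b ->] [c ->] [d ->] H. simpl in H.
      unfold f0 in H. apply He, cantor_inj in H. injection H. intros H1 H2.
      rewrite <- (Hinv a), <- (Hinv b), <- (Hinv c), <- (Hinv d), H1, H2.
      split; reflexivity. }
  set (R := fun p q : T =>
     (forall x, fst (proj1_sig p) x -> fst (proj1_sig q) x) /\
     (forall x y, fst (proj1_sig p) x -> fst (proj1_sig p) y ->
        snd (proj1_sig p) x y = snd (proj1_sig q) x y)).
  destruct (@WO.zorn T (exist _ _ I0) R) as [m Hm].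
  - intro t. split; auto.
  - intros r s t [H1 H2] [H3 H4]. split.
    + intros x Hx. apply H3, H1, Hx.
    + intros x y Hx Hy. rewrite H2 by assumption. apply H4; apply H1; assumption.
  - intros Ch HCh.
    destruct (classic (exists p, Ch p)) as [[p0 Hp0]|Hne].
    2:{ exists (exist _ _ I0). intros s Hs. exfalso. apply Hne. exists s. exact Hs. }
    set (Bs := fun x => exists p, Ch p /\ fst (proj1_sig p) x).
    set (fs := fun x y =>
      match excluded_middle_informative
        (exists p, Ch p /\ fst (proj1_sig p) x /\ fst (proj1_sig p) y) with
      | left H => snd (proj1_sig (proj1_sig (constructive_indefinite_description _ H))) x y
      | right _ => x end).
    assert (Hcommon : forall x y, Bs x -> Bs y ->
       exists p, Ch p /\ fst (proj1_sig p) x /\ fst (proj1_sig p) y).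
    { intros x y [p [Hp Hx]] [q [Hq Hy]].
      destruct (HCh p q Hp Hq) as [[H1 _]|[H1 _]].
      - exists q. auto.
      - exists p. auto. }
    assert (Hkey : forall p x y, Ch p -> fst (proj1_sig p) x -> fst (proj1_sig p) y ->
       fs x y = snd (proj1_sig p) x y).
    { intros p x y Hp Hx Hy. unfold fs.
      destruct excluded_middle_informative as [H|H].
      2:{ exfalso. apply H. exists p. auto. }
      destruct (constructive_indefinite_description _ H) as [q [Hq [Hqx Hqy]]]. simpl.
      destruct (HCh p q Hp Hq) as [[_ H2]|[_ H2]].
      - symmetry. apply H2; assumption.
      - apply H2; assumption. }
    assert (Is : Inv (Bs, fs)).
    { split; [|split]; simpl.
      - intro n. exists p0. split; [exact Hp0|]. apply (proj2_sig p0).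
      - intros x y Hx Hy. destruct (Hcommon x y Hx Hy) as [p [Hp [Hpx Hpy]]].
        rewrite (Hkey p x y Hp Hpx Hpy). exists p. split; [exact Hp|].
        apply (proj2_sig p); assumption.
      - intros x y x' y' Hx Hy Hx' Hy' H.
        destruct (Hcommon x y Hx Hy) as [p [Hp [Hpx Hpy]]].
        destruct (Hcommon x' y' Hx' Hy') as [q [Hq [Hqx Hqy]]].
        rewrite (Hkey p x y Hp Hpx Hpy), (Hkey q x' y' Hq Hqx Hqy) in H.
        destruct (HCh p q Hp Hq) as [[H1 H2]|[H1 H2]].
        + rewrite H2 in H by assumption.
          apply (proj2_sig q); auto.
        + rewrite H2 in H by assumption.
          apply (proj2_sig p); auto. }
    exists (exist _ _ Is). intros p Hp. split; simpl.
    + intros x Hx. exists p. auto.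
    + intros x y Hx Hy. symmetry. apply Hkey; assumption.
  - destruct m as [[B f] [IB [If Ii]]]. simpl in *.
    destruct (comparability {x | B x} {x | ~ B x}) as [[phi Hphi]|[psi Hpsi]].
    + exfalso.
      set (phi' := fun a => match excluded_middle_informative (B a) with
                            | left H => proj1_sig (phi (exist _ a H)) | right _ => a end).
      assert (Hphi1 : forall a, B a -> ~ B (phi' a)).
      { intros a Ha. unfold phi'. destruct excluded_middle_informative; [|contradiction].
        exact (proj2_sig (phi (exist _ a b))). }
      assert (Hphi2 : forall a a', B a -> B a' -> phi' a = phi' a' -> a = a').
      { intros a a' Ha Ha'. unfold phi'.
        destruct excluded_middle_informative as [h|]; [|contradiction].
        destruct excluded_middle_informative as [h'|]; [|contradiction].
        intro H. apply sig_eq in H. apply Hphi in H.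
        apply (f_equal (@proj1_sig _ _)) in H. exact H. }
      set (psi := fun x => epsilon (inhabits (e 0)) (fun a => B a /\ phi' a = x)).
      set (beta := fun x => match excluded_middle_informative (B x) with
                            | left _ => x | right _ => psi x end).
      set (B' := fun x => B x \/ exists a, B a /\ x = phi' a).
      assert (Hbeta : forall x, B' x -> B (beta x) /\
                 x = (if excluded_middle_informative (B x) then beta x else phi' (beta x))).
      { intros x [Hx|[a [Ha ->]]]; unfold beta.
        - destruct excluded_middle_informative; [|contradiction]. auto.
        - destruct excluded_middle_informative as [h|h].
          + exfalso. exact (Hphi1 a Ha h).
          + assert (Hp : B (psi (phi' a)) /\ phi' (psi (phi' a)) = phi' a).
            { apply (epsilon_spec (inhabits (e 0)) (fun b => B b /\ phi' b = phi' a)).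
              exists a; auto. }
            destruct Hp as [Hp1 Hp2]. split; [exact Hp1|]. symmetry; exact Hp2. }
      set (tag := fun x y => if excluded_middle_informative (B x) then 0
                             else if excluded_middle_informative (B y) then 1 else 2).
      set (f' := fun x y => if excluded_middle_informative (B x /\ B y) then f x y
                            else phi' (f (f (beta x) (beta y)) (e (tag x y)))).
      assert (I' : Inv (B', f')).
      { split; [|split]; simpl.
        - intro n. left. apply IB.
        - intros x y Hx Hy. unfold f'. destruct excluded_middle_informative as [[h1 h2]|h].
          + left. apply If; assumption.
          + right. eexists. split; [|reflexivity].
            apply If; [apply If|apply IB]; apply Hbeta; assumption.
        - intros x y x' y' Hx Hy Hx' Hy'. unfold f'.
          destruct (excluded_middle_informative (B x /\ B y)) as [[h1 h2]|h];
          destruct (excluded_middle_informative (B x' /\ B y')) as [[h1' h2']|h'].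
          + apply Ii; assumption.
          + intro H. exfalso. apply (Hphi1 (f (f (beta x') (beta y')) (e (tag x' y')))).
            * apply If; [apply If|apply IB]; apply Hbeta; assumption.
            * rewrite <- H. apply If; assumption.
          + intro H. exfalso. apply (Hphi1 (f (f (beta x) (beta y)) (e (tag x y)))).
            * apply If; [apply If|apply IB]; apply Hbeta; assumption.
            * rewrite H. apply If; assumption.
          + intro H.
            assert (Bx := proj1 (Hbeta x Hx)). assert (By := proj1 (Hbeta y Hy)).
            assert (Bx' := proj1 (Hbeta x' Hx')). assert (By' := proj1 (Hbeta y' Hy')).
            apply Hphi2 in H; [| apply If; [apply If|apply IB]; assumption
                               | apply If; [apply If|apply IB]; assumption].
            apply Ii in H; [|apply If; assumption|apply IB|apply If; assumption|apply IB].
            destruct H as [H Ht]. apply He in Ht.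
            apply Ii in H; try assumption. destruct H as [Hbx Hby].
            assert (Ex := proj2 (Hbeta x Hx)). assert (Ey := proj2 (Hbeta y Hy)).
            assert (Ex' := proj2 (Hbeta x' Hx')). assert (Ey' := proj2 (Hbeta y' Hy')).
            unfold tag in Ht.
            destruct (excluded_middle_informative (B x)) as [bx|bx];
            destruct (excluded_middle_informative (B x')) as [bx'|bx'];
            destruct (excluded_middle_informative (B y)) as [by0|by0];
            destruct (excluded_middle_informative (B y')) as [by'|by'];
            try discriminate; try (exfalso; tauto);
            split; congruence. }
      assert (HR : R (exist _ (B, f) (conj IB (conj If Ii))) (exist _ (B', f') I')).
      { split; simpl.
        - intros x Hx. left; exact Hx.
        - intros x y Hx Hy. unfold f'.
          destruct excluded_middle_informative as [_|h]; [reflexivity|tauto]. }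
      destruct (Hm _ HR) as [Hsub _]. simpl in Hsub.
      apply (Hphi1 (e 0) (IB 0)). apply Hsub. right. exists (e 0). split; [apply IB|reflexivity].
    + set (psi' := fun a => match excluded_middle_informative (~ B a) with
                            | left H => proj1_sig (psi (exist _ a H)) | right _ => a end).
      assert (Hp1 : forall a, ~ B a -> B (psi' a)).
      { intros a Ha. unfold psi'. destruct excluded_middle_informative; [|contradiction].
        exact (proj2_sig (psi (exist _ a n))). }
      assert (Hp2 : forall a a', ~ B a -> ~ B a' -> psi' a = psi' a' -> a = a').
      { intros a a' Ha Ha'. unfold psi'.
        destruct excluded_middle_informative as [h|]; [|contradiction].
        destruct excluded_middle_informative as [h'|]; [|contradiction].
        intro H. apply sig_eq in H. apply Hpsi in H.
        apply (f_equal (@proj1_sig _ _)) in H. exact H. }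
      set (h := fun x => if excluded_middle_informative (B x) then f x (e 0)
                         else f (psi' x) (e 1)).
      assert (Hh1 : forall x, B (h x)).
      { intro x. unfold h. destruct excluded_middle_informative.
        - apply If; auto.
        - apply If; auto. }
      assert (Hh2 : inj h).
      { intros x y. unfold h.
        destruct (excluded_middle_informative (B x)) as [bx|bx];
        destruct (excluded_middle_informative (B y)) as [by0|by0]; intro H;
        apply Ii in H; auto; destruct H as [H1 H2]; apply He in H2;
        try discriminate; auto. }
      exists (fun p => f (h (fst p)) (h (snd p))).
      intros [x y] [x' y'] H. simpl in H. apply Ii in H; auto.
      destruct H as [H1 H2]. apply Hh2 in H1. apply Hh2 in H2. subst; reflexivity.
Qed.

Lemma le_list (A : Type) : le nat A -> le (list A) A.
Proof.
  intro HN. destruct (hess A HN) as [p Hp]. destruct HN as [e He].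
  set (fold := fix fold (l : list A) : A :=
         match l with [] => e 0 | x :: l' => p (x, fold l') end).
  exists (fun l => p (e (length l), fold l)).
  intros l l' H. apply Hp in H. injection H. intros Hf Hl. apply He in Hl.
  clear H. revert l' Hf Hl. induction l as [|x l IH]; intros [|x' l'] Hf Hl; simpl in *.
  - reflexivity.
  - discriminate.
  - discriminate.
  - apply Hp in Hf. injection Hf. intros H1 H2. subst. f_equal. apply IH; auto.
Qed.

Lemma fin_or_inf (A : Type) (I : A -> Prop) :
  (exists l, forall x, I x -> In x l) \/ le nat {x | I x}.
Proof.
  destruct (classic (exists l, forall x, I x -> In x l)) as [H|H]; [left; exact H|right].
  assert (Hn : forall l, exists x, I x /\ ~ In x l).
  { intro l. apply NNPP. intro Hc. apply H. exists l. intros x Hx.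
    apply NNPP. intro Hx'. apply Hc. exists x. auto. }
  set (pick := fun l => proj1_sig (constructive_indefinite_description _ (Hn l))).
  assert (Hpick : forall l, I (pick l) /\ ~ In (pick l) l).
  { intro l. unfold pick. destruct constructive_indefinite_description; simpl; auto. }
  set (build := fix build (n : nat) : list A :=
         match n with 0 => [] | S n => pick (build n) :: build n end).
  assert (Hb : forall n m, n < m -> In (pick (build n)) (build m)).
  { intros n m Hnm. induction Hnm.
    - simpl. left; reflexivity.
    - simpl. right; exact IHHnm. }
  exists (fun n => exist _ (pick (build n)) (proj1 (Hpick (build n)))).
  intros n m Heq. apply (f_equal (@proj1_sig _ _)) in Heq. simpl in Heq.
  destruct (PeanoNat.Nat.lt_trichotomy n m) as [Hl|[He|Hl]]; auto; exfalso.
  - apply (proj2 (Hpick (build m))). rewrite <- Heq. apply Hb, Hl.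
  - apply (proj2 (Hpick (build n))). rewrite Heq. apply Hb, Hl.
Qed.

Lemma good_order (A : Type) : exists lt : A -> A -> Prop,
  (forall P : A -> Prop, (exists x, P x) -> exists m, P m /\ forall y, P y -> ~ lt y m) /\
  (forall x y, lt x y \/ x = y \/ lt y x) /\
  (forall x, ~ le A {y | lt y x}).
Proof.
  destruct (WO.wo_exists A) as [R [Hmin [Hanti Htot]]].
  set (lt0 := fun x y => R x y /\ x <> y).
  assert (Hmin0 : forall P : A -> Prop, (exists x, P x) ->
            exists m, P m /\ forall y, P y -> ~ lt0 y m).
  { intros P HP. destruct (Hmin P HP) as [m [Pm Hm]]. exists m. split; [exact Pm|].
    intros y Py [Hy Hne]. apply Hne. apply Hanti; auto. }
  assert (Htri0 : forall x y, lt0 x y \/ x = y \/ lt0 y x).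
  { intros x y. destruct (classic (x = y)) as [E|E]; [auto|].
    destruct (Htot x y); [left|right;right]; split; auto. }
  destruct (classic (exists i, le A {y | lt0 y i})) as [Hex|Hno].
  2:{ exists lt0. split; [exact Hmin0|split; [exact Htri0|]].
      intros x Hx. apply Hno. exists x. exact Hx. }
  destruct (Hmin0 _ Hex) as [i0 [[psi Hpsi] Hi0]].
  set (ps := fun x => proj1_sig (psi x)).
  assert (Hps : inj ps).
  { intros x y H. apply Hpsi. apply sig_eq. exact H. }
  exists (fun x y => lt0 (ps x) (ps y)).
  split; [|split].
  - intros P [x Px]. destruct (Hmin0 (fun z => exists x, P x /\ ps x = z)) as [m [[x0 [Px0 E]] Hm]].
    + exists (ps x). exists x. auto.
    + exists x0. split; [exact Px0|]. intros y Py Hl. apply (Hm (ps y)).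
      * exists y; auto.
      * rewrite <- E. exact Hl.
  - intros x y. destruct (Htri0 (ps x) (ps y)) as [H|[H|H]].
    + left; exact H.
    + right; left. apply Hps, H.
    + right; right; exact H.
  - intros x [chi Hchi].
    apply (Hi0 (ps x)).
    + exists (fun y => exist (fun z => lt0 z (ps x)) (ps (proj1_sig (chi y))) (proj2_sig (chi y))).
      intros a b H. apply (f_equal (@proj1_sig _ _)) in H. simpl in H.
      apply Hps in H. apply Hchi. apply sig_eq. exact H.
    + exact (proj2_sig (psi x)).
Qed.


#[local] Arguments gmulA {g} a b c.
#[local] Arguments gmul1l {g} a.
#[local] Arguments gmul1r {g} a.
#[local] Arguments gmulVl {g} a.
#[local] Arguments gmulVr {g} a.
Section Grp.
Variable G : group.

Lemma mul_cancel_l (a x y : G) : gmul a x = gmul a y -> x = y.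
Proof.
  intro H. rewrite <- (gmul1l x), <- (gmul1l y), <- (gmulVl a), <- !gmulA, H. reflexivity.
Qed.

Lemma mul_cancel_r (a x y : G) : gmul x a = gmul y a -> x = y.
Proof.
  intro H. rewrite <- (gmul1r x), <- (gmul1r y), <- (gmulVr a), !gmulA, H. reflexivity.
Qed.

Lemma solve_l (a x y : G) : gmul a x = y -> x = gmul (ginv a) y.
Proof. intro H. subst y. rewrite gmulA, gmulVl, gmul1l. reflexivity. Qed.

Definition dsep (D T : list G) :=
  forall t t', In t T -> In t' T -> t <> t' ->
    forall d1 d2, In d1 D -> In d2 D -> gmul d1 t <> gmul d2 t'.

Definition far (D T : list G) (g : G) (T' : list G) (g' : G) :=
  forall t t' d1 d2, In t T -> In t' T' -> In d1 D -> In d2 D ->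
    gmul d1 (gmul t g) <> gmul d2 (gmul t' g').

Lemma far_sym D T g T' g' : far D T g T' g' -> far D T' g' T g.
Proof. intros H t t' d1 d2 H1 H2 H3 H4 E. apply (H t' t d2 d1); auto. Qed.

Definition forb (D T T' : list G) (g' : G) : list G :=
  flat_map (fun t => flat_map (fun t' => flat_map (fun d1 => map (fun d2 =>
     gmul (ginv t) (gmul (ginv d1) (gmul d2 (gmul t' g')))) D) D) T') T.

Lemma forb_spec D T T' g g' : ~ far D T g T' g' -> In g (forb D T T' g').
Proof.
  intro H. unfold far in H.
  apply not_all_ex_not in H. destruct H as [t H].
  apply not_all_ex_not in H. destruct H as [t' H].
  apply not_all_ex_not in H. destruct H as [d1 H].
  apply not_all_ex_not in H. destruct H as [d2 H].
  apply imply_to_and in H. destruct H as [Ht H].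
  apply imply_to_and in H. destruct H as [Ht' H].
  apply imply_to_and in H. destruct H as [Hd1 H].
  apply imply_to_and in H. destruct H as [Hd2 H].
  apply NNPP in H.
  unfold forb. apply in_flat_map. exists t. split; [exact Ht|].
  apply in_flat_map. exists t'. split; [exact Ht'|].
  apply in_flat_map. exists d1. split; [exact Hd1|].
  apply in_map_iff. exists d2. split; [|exact Hd2].
  apply solve_l in H. apply solve_l in H. symmetry. exact H.
Qed.

Lemma nat_le_G : infinite_group G -> le nat G.
Proof.
  intro Hinf. destruct (fin_or_inf G (fun _ => True)) as [[l Hl]|[f Hf]].
  - exfalso. destruct (Hinf l) as [g Hg]. apply Hg, Hl. exact I.
  - exists (fun n => proj1_sig (f n)). intros x y H. apply Hf, sig_eq, H.
Qed.

Lemma universal (D : list G) : infinite_group G ->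
  exists S : G -> Prop, separated D S /\
    forall T, dsep D T -> exists g, forall t, In t T -> S (gmul t g).
Proof.
  intro Hinf.
  assert (HN := nat_le_G Hinf).
  destruct (le_list G HN) as [enc Henc].
  set (sigma := fun g => match excluded_middle_informative (exists T, dsep D T /\ enc T = g) with
                         | left H => proj1_sig (constructive_indefinite_description _ H)
                         | right _ => [] end).
  assert (Hsig1 : forall g, dsep D (sigma g)).
  { intro g. unfold sigma. destruct excluded_middle_informative as [H|H].
    - destruct constructive_indefinite_description as [T0 [HT HE]]. exact HT.
    - intros t t' Ht. destruct Ht. }
  assert (Hsig2 : forall T, dsep D T -> sigma (enc T) = T).
  { intros T HT. unfold sigma. destruct excluded_middle_informative as [H|H].
    - destruct constructive_indefinite_description as [T1 [HT1 E]]. apply Henc, E.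
    - exfalso. apply H. exists T; auto. }
  destruct (good_order G) as [lt [Hleast [Htri Hsmall]]].
  set (Inv := fun p : (G -> Prop) * (G -> G) =>
      (forall i j, lt j i -> fst p i -> fst p j) /\
      (forall i j, fst p i -> fst p j -> i <> j ->
         far D (sigma i) (snd p i) (sigma j) (snd p j))).
  set (T := {p | Inv p}).
  assert (I0 : Inv ((fun _ => False), (fun _ => gone))).
  { split; simpl; intros; contradiction. }
  set (R := fun p q : T =>
     (forall i, fst (proj1_sig p) i -> fst (proj1_sig q) i) /\
     (forall i, fst (proj1_sig p) i -> snd (proj1_sig p) i = snd (proj1_sig q) i)).
  destruct (@WO.zorn T (exist _ _ I0) R) as [m Hm].
  - intro t. split; auto.
  - intros r s t [H1 H2] [H3 H4]. split.
    + intros x Hx. apply H3, H1, Hx.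
    + intros x Hx. rewrite H2 by assumption. apply H4; apply H1; assumption.
  - intros Ch HCh.
    destruct (classic (exists p, Ch p)) as [[p0 Hp0]|Hne].
    2:{ exists (exist _ _ I0). intros s Hs. exfalso. apply Hne. exists s. exact Hs. }
    set (ds := fun i => exists p, Ch p /\ fst (proj1_sig p) i).
    set (ps := fun i =>
      match excluded_middle_informative (exists p, Ch p /\ fst (proj1_sig p) i) with
      | left H => snd (proj1_sig (proj1_sig (constructive_indefinite_description _ H))) i
      | right _ => gone end).
    assert (Hkey : forall p i, Ch p -> fst (proj1_sig p) i -> ps i = snd (proj1_sig p) i).
    { intros p i Hp Hi. unfold ps.
      destruct excluded_middle_informative as [H|H].
      2:{ exfalso. apply H. exists p. auto. }
      destruct (constructive_indefinite_description _ H) as [q [Hq Hqi]]. simpl.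
      destruct (HCh p q Hp Hq) as [[_ H2]|[_ H2]].
      - symmetry. apply H2; assumption.
      - apply H2; assumption. }
    assert (Is : Inv (ds, ps)).
    { split; simpl.
      - intros i j Hji [p [Hp Hi]]. exists p. split; [exact Hp|].
        apply (proj1 (proj2_sig p) i j); assumption.
      - intros i j [p [Hp Hi]] [q [Hq Hj]] Hij.
        rewrite (Hkey p i Hp Hi), (Hkey q j Hq Hj).
        destruct (HCh p q Hp Hq) as [[H1 H2]|[H1 H2]].
        + rewrite H2 by assumption. apply (proj2 (proj2_sig q)); auto.
        + rewrite (H2 j) by assumption. apply (proj2 (proj2_sig p)); auto. }
    exists (exist _ _ Is). intros p Hp. split; simpl.
    + intros x Hx. exists p. auto.
    + intros x Hx. symmetry. apply Hkey; assumption.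
  - destruct m as [[dom pos] [Idc Ifar]]. simpl in *.
    assert (Hall : forall i, dom i).
    { apply NNPP. intro Hn. apply not_all_ex_not in Hn.
      destruct (Hleast (fun i => ~ dom i) Hn) as [i [Hi Hil]].
      assert (Hdom : forall j, dom j <-> lt j i).
      { intro j. split.
        - intro Hj. destruct (Htri j i) as [H|[H|H]]; auto.
          + subst; contradiction.
          + exfalso. apply Hi. apply (Idc j i); assumption.
        - intro Hj. apply NNPP. intro Hn'. exact (Hil j Hn' Hj). }
      assert (Hg : exists g, forall j, dom j -> far D (sigma i) g (sigma j) (pos j)).
      { apply NNPP. intro Hng.
        assert (Hcov : forall g, exists j, dom j /\ In g (forb D (sigma i) (sigma j) (pos j))).
        { intro g. apply NNPP. intro Hc. apply Hng. exists g. intros j Hj.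
          apply NNPP. intro Hf. apply Hc. exists j. split; [exact Hj|].
          apply forb_spec, Hf. }
        destruct (fin_or_inf G dom) as [[l Hl]|[e He]].
        - destruct (Hinf (flat_map (fun j => forb D (sigma i) (sigma j) (pos j)) l)) as [g Hg].
          apply Hg. destruct (Hcov g) as [j [Hj Hin]].
          apply in_flat_map. exists j. split; [apply Hl, Hj|exact Hin].
        - destruct (hess {x | dom x} (ex_intro _ e He)) as [pr Hpr].
          set (jf := fun g => proj1_sig (constructive_indefinite_description _ (Hcov g))).
          assert (Hjf : forall g, dom (jf g) /\ In g (forb D (sigma i) (sigma (jf g)) (pos (jf g)))).
          { intro g. unfold jf. destruct constructive_indefinite_description; simpl; auto. }
          assert (Hnf : forall g, exists n, nth_error (forb D (sigma i) (sigma (jf g)) (pos (jf g))) n = Some g).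
          { intro g. apply In_nth_error, Hjf. }
          set (nf := fun g => proj1_sig (constructive_indefinite_description _ (Hnf g))).
          assert (Hnf' : forall g, nth_error (forb D (sigma i) (sigma (jf g)) (pos (jf g))) (nf g) = Some g).
          { intro g. unfold nf. destruct constructive_indefinite_description; simpl; auto. }
          apply (Hsmall i).
          exists (fun g => exist (fun y => lt y i)
                    (proj1_sig (pr (exist _ (jf g) (proj1 (Hjf g)), e (nf g))))
                    (proj1 (Hdom _) (proj2_sig (pr (exist _ (jf g) (proj1 (Hjf g)), e (nf g)))))).
          intros a b Hab. apply (f_equal (@proj1_sig _ _)) in Hab. simpl in Hab.
          apply sig_eq in Hab. apply Hpr in Hab. injection Hab. intros H1 H2.
          apply He in H1. 
          assert (E := Hnf' a). rewrite H2, H1, Hnf' in E. injection E. auto. }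
      destruct Hg as [g Hg].
      set (dom' := fun k => dom k \/ k = i).
      set (pos' := fun k => if excluded_middle_informative (k = i) then g else pos k).
      assert (I' : Inv (dom', pos')).
      { split; simpl.
        - intros k j Hjk [Hk|Hk].
          + left. apply (Idc k j); assumption.
          + subst k. left. apply (proj2 (Hdom j)), Hjk.
        - intros a b Ha Hb Hab. unfold pos'.
          destruct (excluded_middle_informative (a = i)) as [Ea|Ea];
          destruct (excluded_middle_informative (b = i)) as [Eb|Eb].
          + congruence.
          + subst a. destruct Hb as [Hb|Hb]; [|contradiction]. apply Hg, Hb.
          + subst b. destruct Ha as [Ha|Ha]; [|contradiction]. apply far_sym, Hg, Ha.
          + destruct Ha as [Ha|Ha]; [|contradiction]. destruct Hb as [Hb|Hb]; [|contradiction].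
            apply Ifar; assumption. }
      assert (HR : R (exist _ (dom, pos) (conj Idc Ifar)) (exist _ (dom', pos') I')).
      { split; simpl.
        - intros k Hk. left; exact Hk.
        - intros k Hk. unfold pos'. destruct excluded_middle_informative; [subst; contradiction|reflexivity]. }
      destruct (Hm _ HR) as [Hsub _]. simpl in Hsub. apply Hi, Hsub. right; reflexivity. }
    exists (fun s => exists i t, In t (sigma i) /\ s = gmul t (pos i)).
    split.
    + intros s1 s2 [i [t [Ht E1]]] [j [t' [Ht' E2]]] Hne d1 d2 Hd1 Hd2 E. subst s1 s2.
      destruct (classic (i = j)) as [Eij|Eij].
      * subst j. assert (Ett : t <> t'). { intro; subst; contradiction. }
        apply (Hsig1 i t t' Ht Ht' Ett d1 d2 Hd1 Hd2).
        apply (mul_cancel_r (pos i)). rewrite <- !gmulA. exact E.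
      * apply (Ifar i j (Hall i) (Hall j) Eij t t' d1 d2 Ht Ht' Hd1 Hd2 E).
    + intros T0 HT0. exists (pos (enc T0)). intros t Ht. exists (enc T0), t.
      rewrite Hsig2 by exact HT0. split; [exact Ht|reflexivity].
Qed.

End Grp.


#[local] Arguments gmulA {g} a b c.
#[local] Arguments gmul1l {g} a.
#[local] Arguments gmul1r {g} a.
#[local] Arguments gmulVl {g} a.
#[local] Arguments gmulVr {g} a.

Section Main.
Variables (G : group) (X : Type) (op : topology X) (act : G -> X -> X).
Hypothesis Hflow : is_flow op act.

Lemma act_mul g h x : act (gmul g h) x = act g (act h x).
Proof. destruct Hflow as [_ [_ [_ [[_ H] _]]]]. apply H. Qed.
Lemma act_one x : act gone x = x.
Proof. destruct Hflow as [_ [_ [_ [[H _] _]]]]. apply H. Qed.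
Lemma act_cont g V : op V -> op (fun x => V (act g x)).
Proof. destruct Hflow as [_ [_ [_ [_ H]]]]. apply H. Qed.

Lemma i_ii : (forall D : list G, exists S : G -> Prop, separated D S /\
      (forall x, dense op (orbit_of act S x))) -> SCP op act.
Proof.
  intros H D U HU Hne. destruct (H D) as [S [HS Hd]]. exists S. split; [exact HS|].
  intro x. destruct (Hd x U HU Hne) as [y [Uy [s [Ss E]]]]. exists s. subst y. auto.
Qed.

Lemma finite_handler (D : list G) (S0 : G -> Prop) (U : X -> Prop) :
  op U -> separated D S0 -> (forall x, exists s, S0 s /\ U (act s x)) ->
  exists T, dsep G D T /\ forall x, exists t, In t T /\ U (act t x).
Proof.
  intros HU HS Hc.
  destruct Hflow as [_ [Hcomp _]].
  destruct (Hcomp (fun W => exists s, S0 s /\ W = (fun x => U (act s x)))) as [l [Hl1 Hl2]].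
  - intros W [s [_ ->]]. apply act_cont, HU.
  - intro x. destruct (Hc x) as [s [Hs Hu]]. exists (fun x => U (act s x)). eauto.
  - assert (Hls : exists ls, (forall s, In s ls -> S0 s) /\
        forall W, In W l -> exists s, In s ls /\ W = (fun x => U (act s x))).
    { clear Hl2. induction l as [|W l IH].
      - exists []. split; intros; contradiction.
      - destruct IH as [ls [H1 H2]].
        + intros W' HW'. apply Hl1. right; exact HW'.
        + destruct (Hl1 W (or_introl eq_refl)) as [s [Hs E]].
          exists (s :: ls). split.
          * intros s' [<-|Hs']; auto.
          * intros W' [<-|HW'].
            -- exists s. split; [left; reflexivity|exact E].
            -- destruct (H2 W' HW') as [s' [Hs' E']]. exists s'. split; [right; exact Hs'|exact E']. }
    destruct Hls as [ls [H1 H2]]. exists ls. split.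
    + intros t t' Ht Ht' Hne d1 d2 Hd1 Hd2. apply HS; auto.
    + intro x. destruct (Hl2 x) as [W [HW Wx]]. destruct (H2 W HW) as [s [Hs E]].
      subst W. exists s. auto.
Qed.

Lemma ii_i : infinite_group G -> SCP op act -> (forall D : list G, exists S : G -> Prop,
   separated D S /\ (forall x, dense op (orbit_of act S x))).
Proof.
  intros Hinf HSCP D. destruct (universal G D Hinf) as [S [HS Hu]].
  exists S. split; [exact HS|].
  intros x U HU Hne. destruct (HSCP D U HU Hne) as [S0 [HS0 Hc]].
  destruct (finite_handler D S0 U HU HS0 Hc) as [T [HT Hh]].
  destruct (Hu T HT) as [g Hg].
  destruct (Hh (act g x)) as [t [Ht Hut]].
  exists (act (gmul t g) x). rewrite act_mul. split; [exact Hut|].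
  exists (gmul t g). split; [apply Hg, Ht|rewrite act_mul; reflexivity].
Qed.


Lemma ii_iii : SCP op act -> disjoint_flows op act (bern_top G) (@bern_act G).
Proof.
  intros HSCP C HC Hinv HX HY p. apply NNPP. intro Hp.
  destruct (HC p Hp) as [U [V [HU [HV [Ux [Vz Hbox]]]]]].
  destruct (HV (snd p) Vz) as [F HF].
  destruct (HSCP F U HU (ex_intro _ (fst p) Ux)) as [S [HS Hc]].
  set (z := fun k => match excluded_middle_informative
                 (exists f, In f F /\ exists s, S s /\ k = gmul f s) with
               | left H => snd p (proj1_sig (constructive_indefinite_description _ H))
               | right _ => false end).
  assert (Hz : forall s f, S s -> In f F -> z (gmul f s) = snd p f).
  { intros s f Hs Hf. unfold z. destruct excluded_middle_informative as [H|H].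
    - destruct constructive_indefinite_description as [f' [Hf' [s' [Hs' E]]]]. simpl.
      destruct (classic (s = s')) as [Es|Es].
      + subst s'. apply mul_cancel_r in E. subst; reflexivity.
      + exfalso. exact (HS s s' Hs Hs' Es f f' Hf Hf' E).
    - exfalso. apply H. exists f. split; [exact Hf|]. exists s. auto. }
  destruct (HY z) as [x Hx].
  destruct (Hc x) as [s [Hs Hus]].
  apply (Hbox (act s x, bern_act s z)); simpl.
  - exact Hus.
  - apply HF. intros h Hh. unfold bern_act. apply Hz; assumption.
  - exact (Hinv s (x, z) Hx).
Qed.

Lemma iii_ii : disjoint_flows op act (bern_top G) (@bern_act G) -> SCP op act.
Proof.
  intro Hdis. apply NNPP. intro Hn. unfold SCP in Hn.
  apply not_all_ex_not in Hn. destruct Hn as [D Hn].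
  apply not_all_ex_not in Hn. destruct Hn as [U Hn].
  apply imply_to_and in Hn. destruct Hn as [HU Hn].
  apply imply_to_and in Hn. destruct Hn as [[u Hu] Hno].
  set (good := fun (w : G -> bool) g => w g = true /\ forall d1 d2, In d1 D -> In d2 D ->
        gmul (ginv d2) (gmul d1 g) <> g -> w (gmul (ginv d2) (gmul d1 g)) = false).
  set (C := fun q : X * (G -> bool) => forall g, good (snd q) g -> ~ U (act g (fst q))).
  assert (Hall : forall q, C q).
  { apply Hdis.
    - intros q Hq. unfold C in Hq.
      apply not_all_ex_not in Hq. destruct Hq as [g Hq].
      apply imply_to_and in Hq. destruct Hq as [Hg Hq]. apply NNPP in Hq.
      set (F := g :: flat_map (fun d1 => map (fun d2 => gmul (ginv d2) (gmul d1 g)) D) D).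
      exists (fun y => U (act g y)), (fun w' => forall h, In h F -> w' h = snd q h).
      split; [apply act_cont, HU|]. split.
      + intros z Hz. exists F. intros z' Hz' h Hh. rewrite Hz' by exact Hh. apply Hz, Hh.
      + split; [exact Hq|]. split; [intros; reflexivity|].
        intros q' Hq'1 Hq'2 Hc. apply (Hc g); [|exact Hq'1].
        split.
        * rewrite Hq'2 by (left; reflexivity). apply Hg.
        * intros d1 d2 Hd1 Hd2 Hne. rewrite Hq'2.
          -- apply Hg; assumption.
          -- right. apply in_flat_map. exists d1. split; [exact Hd1|].
             apply in_map_iff. exists d2. auto.
    - intros a q Hq g [Hg1 Hg2] HUg. simpl in *.
      apply (Hq (gmul g a)); simpl.
      + split.
        * exact Hg1.
        * intros d1 d2 Hd1 Hd2 Hne.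
          assert (E : gmul (ginv d2) (gmul d1 (gmul g a)) = gmul (gmul (ginv d2) (gmul d1 g)) a).
          { rewrite !gmulA. reflexivity. }
          rewrite E. apply (Hg2 d1 d2 Hd1 Hd2).
          intro E'. apply Hne. rewrite E, E'. reflexivity.
      + rewrite act_mul. exact HUg.
    - intro x. exists (fun _ => false). intros g [H _]. discriminate.
    - intro w. apply NNPP. intro Hnw.
      apply Hno. exists (good w). split.
      + intros g h [Hg1 Hg2] [Hh1 Hh2] Hgh d1 d2 Hd1 Hd2 E.
        symmetry in E. apply solve_l in E.
        assert (Hk : gmul (ginv d2) (gmul d1 g) <> g).
        { rewrite <- E. intro Heq. apply Hgh. symmetry. exact Heq. }
        assert (W := Hg2 d1 d2 Hd1 Hd2 Hk). rewrite <- E in W. congruence.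
      + intro x. apply NNPP. intro Hx. apply Hnw. exists x. intros g Hg HUg.
        apply Hx. exists g. auto. }
  set (w1 := fun k => if excluded_middle_informative (k = @gone G) then true else false).
  apply (Hall (u, w1) (@gone G)).
  - split.
    + simpl. unfold w1. destruct (excluded_middle_informative (@gone G = @gone G)) as [_|h];
        [reflexivity|exfalso; apply h; reflexivity].
    + intros d1 d2 _ _ Hne. simpl. unfold w1.
      destruct (excluded_middle_informative (gmul (ginv d2) (gmul d1 (@gone G)) = @gone G));
        [contradiction|reflexivity].
  - simpl. rewrite act_one. exact Hu.
Qed.

End Main.

Theorem proposition2p5 (G : group) (X : Type) (op : topology X)
  (act : G -> X -> X) :
  infinite_group G -> is_flow op act -> minimal op act ->
  ((forall D : list G, exists S : G -> Prop, separated D S /\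
      (forall x, dense op (orbit_of act S x)))
   <-> SCP op act) /\
  (SCP op act <-> disjoint_flows op act (bern_top G) (@bern_act G)).
Proof.
  intros Hinf Hflow _. split; split.
  - apply i_ii.
  - apply ii_i; assumption.
  - apply ii_iii; assumption.
  - apply iii_ii; assumption.
Qed.
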